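(* Every quantifier-free formula in the signature $\{\cup,\cap,\bot,c_0,\min,\max,\mathrm{ips}\}$ is equivalent in the structure $\mathcal{W}(I)$ to a positive existential formula in the same signature.
   Context: Let $I$ be a dense linear order with left endpoint $0$ and no right endpoint. $\mathcal{W}(I)$ is the structure whose universe is the set $\mathcal{P}_{\mathrm{fin}}(I)$ of finite subsets of $I$, interpreted as follows. - $\cup$ and $\cap$ are union and intersection. - $\bot$ is $\emptyset$, and $c_0$ is $\{0\}$. - $\min$ and $\max$ send a nonempty finite set to the singleton of its minimum, respectively maximum, and both fix $\emptyset$. - $\mathrm{ips}$ is the binary function $\mathrm{ips}(A,B)=\{i\in A: s_A(i)\in B\}$, where $s_A$ is the successor function of the finite linear order $A$. A positive existential formula is one built from atomic formulas using only $\wedge$, $\vee$ and $\exists$. *)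

(* Defs.v *)
From HB Require Import structures.
From mathcomp Require Import all_boot all_order.
From mathcomp Require Import finmap.
Set Implicit Arguments. Unset Strict Implicit. Unset Printing Implicit Defensive.
Import Order.TTheory.
Local Open Scope order_scope.
Local Open Scope fset_scope.

(* The structure W(I): universe = finite subsets of a totally ordered type I. *)
Section W.
Variables (d : Order.disp_t) (I : orderType d) (c0 : I).

Definition Wmin (A : {fset I}) : {fset I} :=
  [fset i in A | all (fun j => i <= j) A].
Definition Wmax (A : {fset I}) : {fset I} :=
  [fset i in A | all (fun j => j <= i) A].

Definition is_succ_in (A : {fset I}) (i j : I) : bool :=
  [&& j \in A, i < j & ~~ has (fun k => (i < k) && (k < j)) A].

Definition Wips (A B : {fset I}) : {fset I} :=
  [fset i in A | has (fun j => is_succ_in A i j && (j \in B)) A].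

Inductive term : Type :=
| TVar : nat -> term
| TCup : term -> term -> term
| TCap : term -> term -> term
| TBot : term
| TC0 : term
| TMin : term -> term
| TMax : term -> term
| TIps : term -> term -> term.

Fixpoint teval (v : nat -> {fset I}) (t : term) : {fset I} :=
  match t with
  | TVar n => v n
  | TCup t1 t2 => teval v t1 `|` teval v t2
  | TCap t1 t2 => teval v t1 `&` teval v t2
  | TBot => fset0
  | TC0 => [fset c0]
  | TMin t1 => Wmin (teval v t1)
  | TMax t1 => Wmax (teval v t1)
  | TIps t1 t2 => Wips (teval v t1) (teval v t2)
  end.

Inductive qf_formula : Type :=
| QEq : term -> term -> qf_formula
| QNot : qf_formula -> qf_formula
| QAnd : qf_formula -> qf_formula -> qf_formula
| QOr : qf_formula -> qf_formula -> qf_formula.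

Fixpoint qf_sat (v : nat -> {fset I}) (f : qf_formula) : Prop :=
  match f with
  | QEq t1 t2 => teval v t1 = teval v t2
  | QNot f1 => ~ qf_sat v f1
  | QAnd f1 f2 => qf_sat v f1 /\ qf_sat v f2
  | QOr f1 f2 => qf_sat v f1 \/ qf_sat v f2
  end.

Inductive pe_formula : Type :=
| PEq : term -> term -> pe_formula
| PAnd : pe_formula -> pe_formula -> pe_formula
| POr : pe_formula -> pe_formula -> pe_formula
| PEx : nat -> pe_formula -> pe_formula.

Definition upd (v : nat -> {fset I}) (n : nat) (A : {fset I}) : nat -> {fset I} :=
  fun m => if m == n then A else v m.

Fixpoint pe_sat (v : nat -> {fset I}) (f : pe_formula) : Prop :=
  match f with
  | PEq t1 t2 => teval v t1 = teval v t2
  | PAnd f1 f2 => pe_sat v f1 /\ pe_sat v f2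
  | POr f1 f2 => pe_sat v f1 \/ pe_sat v f2
  | PEx n f1 => exists A : {fset I}, pe_sat (upd v n A) f1
  end.

End W.

(* Main.v *)
Require Import Defs.
From mathcomp Require Import all_boot all_order.
From mathcomp Require Import finmap.
From Stdlib Require Import Classical.
Import Order.TTheory.
Local Open Scope order_scope.

Section Aux.
Local Open Scope fset_scope.
Variables (d : Order.disp_t) (I : orderType d) (c0 : I).
Hypothesis c0_least : forall x : I, c0 <= x.

Fixpoint tvars (t : term) : nat :=
  match t with
  | TVar n => n
  | TCup a b | TCap a b | TIps a b => maxn (tvars a) (tvars b)
  | TBot | TC0 => 0
  | TMin a | TMax a => tvars a
  end.

Lemma teval_upd v n A t : (tvars t < n)%N -> teval c0 (upd v n A) t = teval c0 v t.
Proof.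
elim: t => //=.
- by move=> m Hm; rewrite /upd; case: eqP => // E; rewrite E ltnn in Hm.
- by move=> a IHa b IHb; rewrite gtn_max => /andP[Ha Hb]; rewrite IHa // IHb.
- by move=> a IHa b IHb; rewrite gtn_max => /andP[Ha Hb]; rewrite IHa // IHb.
- by move=> a IHa H; rewrite IHa.
- by move=> a IHa H; rewrite IHa.
- by move=> a IHa b IHb; rewrite gtn_max => /andP[Ha Hb]; rewrite IHa // IHb.
Qed.

Lemma memW (A B : {fset I}) i : (i \in Wips A B) = (i \in A) && has (fun j => is_succ_in A i j && (j \in B)) A.
Proof. by rewrite /Wips !inE. Qed.

Lemma c0mem (S : {fset I}) : ([fset c0] `&` S = [fset c0]) <-> c0 \in S.
Proof.
split.
- by move=> /fsetP /(_ c0); rewrite !inE eqxx /=; case: (c0 \in S).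
- by move=> H; apply/fsetP => x; rewrite !inE; case: eqP => // ->.
Qed.

Definition nonemptyF (X : term) : pe_formula :=
  POr (PEq (TCap TC0 X) TC0) (PEq (TCap TC0 (TIps (TCup TC0 X) X)) TC0).

Lemma nonemptyF_sem v X :
  pe_sat c0 v (nonemptyF X) -> exists y, y \in teval c0 v X.
Proof.
rewrite /= !c0mem => -[H|]; first by exists c0.
by rewrite memW => /andP[_ /hasP[j _ /andP[_ Hj]]]; exists j.
Qed.

Lemma nonemptyF_single v X x : teval c0 v X = [fset x] -> pe_sat c0 v (nonemptyF X).
Proof.
move=> E; rewrite /= !c0mem E.
have [->|nx] := eqVneq x c0; first by left; rewrite inE.
right; rewrite memW !inE eqxx /=.
apply/hasP; exists x; first by rewrite !inE eqxx orbT.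
rewrite /is_succ_in !inE eqxx orbT /= andbT.
have lt : c0 < x by rewrite lt_neqAle eq_sym nx c0_least.
rewrite lt /=; apply/hasPn => k; rewrite !inE => /orP[]/eqP ->.
- by rewrite ltxx.
- by rewrite ltxx andbF.
Qed.

Definition neqF (t1 t2 : term) : pe_formula :=
  let n := (maxn (tvars t1) (tvars t2)).+1 in
  let X := TVar n in
  PEx n (POr (PAnd (nonemptyF X) (PAnd (PEq (TCap X t1) X) (PEq (TCap X t2) TBot)))
             (PAnd (nonemptyF X) (PAnd (PEq (TCap X t2) X) (PEq (TCap X t1) TBot)))).

Lemma neqF_sem v t1 t2 : teval c0 v t1 <> teval c0 v t2 <-> pe_sat c0 v (neqF t1 t2).
Proof.
set n := (maxn (tvars t1) (tvars t2)).+1.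
have H1 A : teval c0 (upd v n A) t1 = teval c0 v t1
  by apply: teval_upd; rewrite ltnS leq_maxl.
have H2 A : teval c0 (upd v n A) t2 = teval c0 v t2
  by apply: teval_upd; rewrite ltnS leq_maxr.
have HX A : teval c0 (upd v n A) (TVar n) = A by rewrite /= /upd eqxx.
split.
- move=> Hne.
  have [x Hx] : exists x, (x \in teval c0 v t1) != (x \in teval c0 v t2).
    apply: NNPP => Hn; apply: Hne; apply/fsetP => x.
    apply/eqP; apply: NNPP => Hx; apply: Hn; exists x; apply/negP; exact: Hx.
  have Hs := nonemptyF_single _ _ _ (HX [fset x]). rewrite /neqF -/n; exists [fset x]. simpl in Hs |- *.
  rewrite H1 H2 /upd eqxx; rewrite /upd eqxx in Hs.
  case E1: (x \in teval c0 v t1); move: Hx; rewrite E1.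
  + move=> E2; have {}E2 : (x \in teval c0 v t2) = false by (move: E2; case: (x \in _)).
    left; split => //; split.
    * by apply/fsetP => y; rewrite !inE; case: eqP => // ->.
    * by apply/fsetP => y; rewrite !inE; case: eqP => // ->; rewrite E2.
  + move=> E2; have {}E2 : (x \in teval c0 v t2) = true by (move: E2; case: (x \in _)).
    right; split => //; split.
    * by apply/fsetP => y; rewrite !inE; case: eqP => // ->.
    * by apply/fsetP => y; rewrite !inE; case: eqP => // ->; rewrite E1.
- move=> [A [[Hn [Ha Hb]]|[Hn [Ha Hb]]]];
  have [y Hy] := nonemptyF_sem _ _ Hn; move: Ha Hb; rewrite /= H1 H2 /upd eqxx;
  rewrite /= /upd eqxx in Hy;
  move=> /fsetP /(_ y) Ha /fsetP /(_ y) Hb; rewrite !inE Hy /= in Ha Hb => E.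
  all: by rewrite E Ha in Hb || by rewrite -E Ha in Hb.
Qed.

Lemma main_both (phi : qf_formula) :
  exists psi : pe_formula * pe_formula,
    forall v, (qf_sat c0 v phi <-> pe_sat c0 v psi.1) /\ (~ qf_sat c0 v phi <-> pe_sat c0 v psi.2).
Proof.
elim: phi.
- move=> t1 t2; exists (PEq t1 t2, neqF t1 t2) => v; split => //=.
  exact: neqF_sem.
- move=> f [[p n] H]; exists (n, p) => v /=; have [A B] := H v; split => //.
  split; first by move=> /NNPP; apply A.
  by move=> /A Hf Hn.
- move=> f [[p n] H] g [[p' n'] H']; exists (PAnd p p', POr n n') => v /=.
  have [A B] := H v; have [A' B'] := H' v.
  split; first by rewrite A A'.
  split.
  + by move=> Hn; apply NNPP => Hc; apply: Hn; split; apply NNPP => Hx;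
       apply: Hc; [left; apply/B | right; apply/B'].
  + by move=> [/B|/B'] Hx [Ha Hb].
- move=> f [[p n] H] g [[p' n'] H']; exists (POr p p', PAnd n n') => v /=.
  have [A B] := H v; have [A' B'] := H' v.
  split; first by rewrite A A'.
  split.
  + by move=> Hn; split; [apply/B | apply/B'] => Hx; apply: Hn; [left|right].
  + by move=> [/B Ha /B' Hb] [].
Qed.
End Aux.

Theorem proposition3p5 (d : Order.disp_t) (I : orderType d) (c0 : I)
  (c0_least : forall x : I, c0 <= x)
  (dense : forall x y : I, x < y -> exists z : I, x < z /\ z < y)
  (no_max : forall x : I, exists y : I, x < y) :
  forall phi : qf_formula,
    exists psi : pe_formula,
      forall v : nat -> {fset I}, qf_sat c0 v phi <-> pe_sat c0 v psi.
Proof.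
move=> phi; have [[p n] H] := main_both _ _ c0 c0_least phi.
by exists p => v; have [] := H v.
Qed.
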